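(* Let $X$ be the Brady complex and $x$ a vertex of $X$. Among the five Hamiltonian cycles of the link $L_x$, at most two are of the form $\Sigma\cap L_x$ for some Hamiltonian surface $\Sigma$ of $X$.
   Context: The Brady complex $X$ is the simply connected CAT(0) piecewise Euclidean 2-complex (constructed by T. Brady) on which $\mathrm{Aut}(F_2)$ acts properly and cocompactly by cellular isometries, transitively on vertices. Its closed 2-cells (faces) are unit equilateral triangles and unit lozenges (rhombi with angles $\pi/3$ and $2\pi/3$); every edge lies in exactly one triangle and two lozenges. The link $L_x$ of a vertex $x$ is the graph whose vertices are the edges of $X$ at $x$ and whose edges are the corners at $x$ of faces containing $x$; it is isomorphic to the Moebius ladder on four rungs (cubic graph on eight vertices), which has exactly five Hamiltonian cycles. A Hamiltonian surface in $X$ is a connected union $\Sigma$ of closed faces which is a surface without boundary, contains every vertex and every edge of $X$, and has no multiple vertex; $\Sigma\cap L_x$ denotes the set of corners at $x$ of faces of $\Sigma$, which is a Hamiltonian cycle of $L_x$. *)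

(* Defs.v *)
From mathcomp Require Import all_boot.
From mathcomp Require Import finmap.
From Stdlib Require Import Relation_Operators.

Set Implicit Arguments.
Unset Strict Implicit.
Unset Printing Implicit Defensive.

Local Open Scope fset_scope.

(* a letter (g, s): g = false is a, g = true is b; s = true means inverse *)
Definition letter := (bool * bool)%type.
Definition word := seq letter.

Definition linv (l : letter) : letter := (l.1, ~~ l.2).

Definition reduce (w : word) : word :=
  foldr (fun l acc => match acc with
                      | l' :: acc' => if l' == linv l then acc' else l :: acc
                      | [::] => [:: l]
                      end) [::] w.

Definition reduced (w : word) : bool := reduce w == w.

Definition fmul (u v : word) : word := reduce (u ++ v).
Definition finv (u : word) : word := rev (map linv u).

Definition ga : word := [:: (false, false)].
Definition gb : word := [:: (true, false)].

Definition subst (u v : word) (w : word) : word :=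
  reduce (flatten (map (fun l => let x := if l.1 then v else u in
                                 if l.2 then finv x else x) w)).

Definition is_basis (u v : word) : Prop :=
  [/\ reduced u, reduced v,
      (forall w1 w2, reduced w1 -> reduced w2 -> subst u v w1 = subst u v w2 -> w1 = w2)
    & (forall w, reduced w -> exists2 w', reduced w' & subst u v w' = w)].

(* vertices: bases up to signed permutation, encoded by {u, u^-1, v, v^-1} *)
Definition vtx := {fset word}.
Definition vert (u v : word) : vtx := [fset u; finv u; v; finv v].

Definition is_vertex (x : vtx) : Prop := exists u v, is_basis u v /\ x = vert u v.

(* edges: unordered pairs of vertices; the edges of X are the elementary
   Nielsen moves  {u, v} -- {u, uv} *)
Definition edge := {fset vtx}.
Definition mkedge (x y : vtx) : edge := [fset x; y].

Definition is_edge (e : edge) : Prop :=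
  exists u v, is_basis u v /\ e = mkedge (vert u v) (vert u (fmul u v)).

Definition face := {fset edge}.

Definition tri (u v : word) : face :=
  let x := vert u v in
  let y := vert u (fmul u v) in
  let z := vert v (fmul u v) in
  [fset mkedge x y; mkedge y z; mkedge z x].

Definition loz (u v : word) (s : bool) : face :=
  let r := if s then u else finv u in
  let x := vert u v in
  let y := vert u (fmul u v) in
  let z := vert u (fmul (fmul u v) r) in
  let w := vert u (fmul v r) in
  [fset mkedge x y; mkedge y z; mkedge z w; mkedge w x].

Definition is_triangle (F : face) : Prop :=
  exists u v, is_basis u v /\ F = tri u v.
Definition is_lozenge (F : face) : Prop :=
  exists u v s, is_basis u v /\ F = loz u v s.
Definition is_face (F : face) : Prop := is_triangle F \/ is_lozenge F.

Definition face_has (F : face) (x : vtx) : Prop := exists2 e, e \in F & x \in e.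

(* A union Sigma of closed faces is given by its set S of faces. *)
Definition faceset := face -> Prop.

(* Sigma \cap L_x : the corners at x of faces of Sigma (a corner at x of a
   face F containing x is identified with F, each face having exactly one
   corner at each of its vertices) *)
Definition link_part (S : faceset) (x : vtx) : face -> Prop :=
  fun F => S F /\ face_has F x.

(* adjacency in the subgraph Sigma \cap L_x of the link L_x: the two edges
   at x of a face of Sigma *)
Definition link_adj (S : faceset) (x : vtx) (e e' : edge) : Prop :=
  exists F, [/\ S F, e \in F, e' \in F & [/\ x \in e, x \in e' & e != e']].

Definition is_ham_surface (S : faceset) : Prop :=
  [/\
      (forall F, S F -> is_face F),
      (forall F F', S F -> S F' ->
         clos_refl_trans face
           (fun G G' => [/\ S G, S G' & exists x, face_has G x /\ face_has G' x])
           F F'),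
      (* surface without boundary containing every edge of X (hence every
         vertex): every edge of X lies in exactly two faces of Sigma *)
      (forall e, is_edge e ->
         exists F1 F2, [/\ F1 <> F2, S F1, S F2, e \in F1 & e \in F2] /\
                       (forall F, S F -> e \in F -> F = F1 \/ F = F2)) &
      (* no multiple vertex: for every vertex x, Sigma \cap L_x is connected
         (a single cycle through all edges at x) *)
      (forall x, is_vertex x -> forall e e', is_edge e -> is_edge e' ->
         x \in e -> x \in e' -> clos_refl_trans edge (link_adj S x) e e')].

Definition same_link (S1 S2 : faceset) (x : vtx) : Prop :=
  forall F, link_part S1 x F <-> link_part S2 x F.

(* Main.v *)
From Pilot Require Import Defs.
From mathcomp Require Import all_boot.
From mathcomp Require Import finmap.
From Stdlib Require Import Relation_Operators Operators_Properties ClassicalEpsilon.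
Import Pilot.Defs.
Set Implicit Arguments. Unset Strict Implicit. Unset Printing Implicit Defensive.
Local Open Scope fset_scope.

Definition rstep (l : letter) (acc : word) : word :=
  match acc with l' :: acc' => if l' == linv l then acc' else l :: acc | [::] => [:: l] end.

Lemma reduce_cons l w : reduce (l :: w) = rstep l (reduce w).
Proof. by []. Qed.

Definition nc : word -> bool := sorted (fun a b => b != linv a).

Lemma linvK : involutive linv. Proof. by case=> a b; rewrite /linv /= negbK. Qed.
Lemma linv_neq l : linv l != l. Proof. by case: l => a b; rewrite /linv /=; apply/eqP => -[]; case: b. Qed.

Lemma nc_rstep l acc : nc acc -> nc (rstep l acc).
Proof.
rewrite /nc; case: acc => [|l' acc] H; first by [].
rewrite /=; case: ifP => E; first exact: (path_sorted H).
by rewrite /= E.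
Qed.

Lemma nc_reduce w : nc (reduce w).
Proof. by elim: w => [|l w IH] //=; rewrite -/(reduce w); apply: nc_rstep. Qed.

Lemma reduce_nc w : nc w -> reduce w = w.
Proof.
elim: w => [|l w IH] //= H.
rewrite -/(reduce w) IH; last exact: (path_sorted H).
case: w H {IH} => [|l' w] //= /andP[H _]. by rewrite (negbTE H).
Qed.

Lemma reducedE w : reduced w = nc w.
Proof.
apply/eqP/idP => [<-|]; [exact: nc_reduce | exact: reduce_nc].
Qed.

Lemma rstepK l acc : nc acc -> rstep l (rstep (linv l) acc) = acc.
Proof.
case: acc => [|l' acc] /=; first by rewrite eqxx.
rewrite linvK; case: (eqVneq l' l) => [-> | E] H.
  case: acc H => [|l'' acc] //= /andP[H _].
  by rewrite (negbTE H).
by rewrite /= eqxx.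
Qed.

Section FoldRed.
Variable (f : letter -> word -> word) (P : word -> Prop).
Hypothesis fP : forall l acc, P acc -> P (f l acc).
Hypothesis fK : forall l acc, P acc -> f l (f (linv l) acc) = acc.

Lemma foldr_P x acc : P acc -> P (foldr f acc x).
Proof. by elim: x => //= l x IH /IH; apply: fP. Qed.

Lemma fold_reduce x acc : P acc -> foldr f acc (reduce x) = foldr f acc x.
Proof.
move=> Pa; elim: x => [|l x IH] //=.
rewrite -/(reduce x) -IH.
have: nc (reduce x) by apply: nc_reduce.
case: (reduce x) => [|l' r] //= _.
case: ifP => [/eqP -> | _] //=.
by rewrite fK //; apply: foldr_P.
Qed.
End FoldRed.

Definition red_app (x acc : word) := foldr rstep acc x.

Lemma reduce_cat x y : reduce (x ++ y) = red_app x (reduce y).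
Proof. by rewrite /reduce foldr_cat. Qed.

Lemma red_app_reduce x acc : nc acc -> red_app (reduce x) acc = red_app x acc.
Proof.
move=> H; apply: (@fold_reduce rstep (fun w => nc w)) => //.
- by move=> *; apply: nc_rstep.
- by move=> *; apply: rstepK.
Qed.

Lemma nc_red_app x acc : nc acc -> nc (red_app x acc).
Proof. by move=> H; apply: (@foldr_P rstep (fun w => nc w)) => // *; apply: nc_rstep. Qed.

Lemma reduceK w : reduce (reduce w) = reduce w.
Proof. by rewrite reduce_nc // nc_reduce. Qed.

Lemma reduce_catl x y : reduce (reduce x ++ y) = reduce (x ++ y).
Proof. by rewrite !reduce_cat red_app_reduce // nc_reduce. Qed.

Lemma reduce_catr x y : reduce (x ++ reduce y) = reduce (x ++ y).
Proof. by rewrite !reduce_cat reduceK. Qed.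

Lemma fmulA x y z : fmul (fmul x y) z = fmul x (fmul y z).
Proof. by rewrite /fmul reduce_catl reduce_catr catA. Qed.

Lemma fmul_reducedl x y : fmul (reduce x) y = fmul x y.
Proof. exact: reduce_catl. Qed.
Lemma fmul_reducedr x y : fmul x (reduce y) = fmul x y.
Proof. exact: reduce_catr. Qed.

Lemma nc_fmul x y : nc (fmul x y). Proof. exact: nc_reduce. Qed.

Lemma fmul0w x : nc x -> fmul [::] x = x. Proof. exact: reduce_nc. Qed.
Lemma fmulw0 x : nc x -> fmul x [::] = x. Proof. by rewrite /fmul cats0; apply: reduce_nc. Qed.

Lemma finv_cons l x : finv (l :: x) = finv x ++ [:: linv l].
Proof. by rewrite /finv /= rev_cons cats1. Qed.

Lemma red_app_inv x acc : nc acc -> red_app x (red_app (finv x) acc) = acc.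
Proof.
elim: x acc => [|l x IH] acc Ha //=.
rewrite finv_cons /red_app foldr_cat /= -/(red_app x _) -/(red_app (finv x) _) IH.
  by rewrite rstepK.
by apply: nc_rstep.
Qed.

Lemma finvK : involutive finv.
Proof. by move=> x; rewrite /finv map_rev revK -map_comp (eq_map linvK) map_id. Qed.

Lemma fmulV x : fmul x (finv x) = [::].
Proof. by rewrite /fmul reduce_cat; apply: red_app_inv. Qed.

Lemma fmulVx x : fmul (finv x) x = [::].
Proof. by rewrite -{2}(finvK x) fmulV. Qed.

Lemma nc_finv x : nc x -> nc (finv x).
Proof.
move=> H; move: H; rewrite /nc /finv rev_sorted sorted_map => H.
apply: sub_sorted H => a b /=; rewrite linvK; apply: contra => /eqP ->.
by [].
Qed.

Lemma fmulKV x y : nc y -> fmul (finv x) (fmul x y) = y.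
Proof. by move=> Hy; rewrite -fmulA fmulVx fmul0w. Qed.
Lemma fmulK x y : nc y -> fmul (fmul y x) (finv x) = y.
Proof. by move=> Hy; rewrite fmulA fmulV fmulw0. Qed.
Lemma fmulVK x y : nc y -> fmul x (fmul (finv x) y) = y.
Proof. by move=> Hy; rewrite -fmulA fmulV fmul0w. Qed.

Lemma inv_uniq z y : nc z -> nc y -> fmul z y = [::] -> y = finv z.
Proof.
move=> Hz Hy E.
by rewrite -(fmulKV z Hy) E fmulw0 // nc_finv.
Qed.

Definition img (u v : word) (l : letter) : word :=
  let x := if l.1 then v else u in if l.2 then finv x else x.

Lemma substE u v w : subst u v w = reduce (flatten (map (img u v) w)).
Proof. by []. Qed.

Lemma nc_subst u v w : nc (subst u v w). Proof. exact: nc_reduce. Qed.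

Lemma subst_cat u v x y : subst u v (x ++ y) = fmul (subst u v x) (subst u v y).
Proof. by rewrite !substE map_cat flatten_cat /fmul reduce_catl reduce_catr. Qed.

Lemma subst_cons u v l w : subst u v (l :: w) = fmul (img u v l) (subst u v w).
Proof. by rewrite substE /= /fmul reduce_catr. Qed.

Lemma subst_nil u v : subst u v [::] = [::]. Proof. by []. Qed.

Lemma img_linv u v l : img u v (linv l) = finv (img u v l).
Proof. by case: l => [g []]; rewrite /img /= ?finvK. Qed.

Lemma subst_fold u v w : subst u v w = foldr (fun l acc => red_app (img u v l) acc) [::] w.
Proof.
elim: w => [|l w IH] //=.
by rewrite subst_cons -IH /fmul reduce_cat reduce_nc // nc_subst.
Qed.

Lemma subst_reduce u v w : subst u v (reduce w) = subst u v w.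
Proof.
rewrite !subst_fold; apply: (@fold_reduce _ (fun w => nc w)) => //.
- by move=> l acc H; apply: nc_red_app.
- by move=> l acc H; rewrite img_linv red_app_inv.
Qed.

Lemma subst_fmul u v x y : subst u v (fmul x y) = fmul (subst u v x) (subst u v y).
Proof. by rewrite /fmul subst_reduce subst_cat. Qed.

Lemma subst_finv u v x : subst u v (finv x) = finv (subst u v x).
Proof.
apply: inv_uniq; rewrite ?nc_subst //.
by rewrite -subst_cat -subst_reduce -/(fmul x (finv x)) fmulV.
Qed.

Lemma subst_img u v p q l :
  subst u v (img p q l) = img (subst u v p) (subst u v q) l.
Proof. by case: l => [[] []]; rewrite /img /= ?subst_finv. Qed.

Lemma subst_comp u v p q w :
  subst u v (subst p q w) = subst (subst u v p) (subst u v q) w.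
Proof.
elim: w => [|l w IH] //.
by rewrite !subst_cons subst_fmul IH subst_img.
Qed.

Lemma subst_ab w : subst ga gb w = reduce w.
Proof.
rewrite substE; congr reduce.
by elim: w => [|[[] []] w IH] //=; rewrite IH.
Qed.

Lemma subst_ga u v : nc u -> subst u v ga = u.
Proof. by move=> H; rewrite substE (_ : flatten _ = u) ?reduce_nc //= cats0. Qed.
Lemma subst_gb u v : nc v -> subst u v gb = v.
Proof. by move=> H; rewrite substE (_ : flatten _ = v) ?reduce_nc //= cats0. Qed.

Section Basis.
Variables (u v : word).
Hypothesis Hb : is_basis u v.

Lemma basis_nc_u : nc u. Proof. by case: Hb => H _ _ _; rewrite -reducedE. Qed.
Lemma basis_nc_v : nc v. Proof. by case: Hb => _ H _ _; rewrite -reducedE. Qed.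

Lemma phi_inj w1 w2 : nc w1 -> nc w2 -> subst u v w1 = subst u v w2 -> w1 = w2.
Proof. by case: Hb => _ _ H _ ? ?; apply: H; rewrite reducedE. Qed.

Lemma phi_surj w : nc w -> exists2 w', nc w' & subst u v w' = w.
Proof.
case: Hb => _ _ _ H Hw; have [w' Hw' E] := H w (introT eqP (reduce_nc Hw)).
by exists w'; rewrite // -reducedE.
Qed.

Lemma basis_phi p q p2 q2 : nc p -> nc q -> nc p2 -> nc q2 ->
  subst p2 q2 p = ga -> subst p2 q2 q = gb ->
  subst p q p2 = ga -> subst p q q2 = gb ->
  is_basis (subst u v p) (subst u v q).
Proof.
move=> Np Nq Np2 Nq2 E1 E2 E3 E4; split; rewrite ?reducedE ?nc_subst //.
- move=> w1 w2; rewrite !reducedE => H1 H2; rewrite -!subst_comp => E.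
  have E' := phi_inj (nc_subst _ _ _) (nc_subst _ _ _) E.
  have := congr1 (subst p2 q2) E'.
  by rewrite !subst_comp E1 E2 !subst_ab !reduce_nc.
- move=> w; rewrite reducedE => Hw.
  have [w1 Hw1 <-] := phi_surj Hw.
  exists (subst p2 q2 w1); first by rewrite reducedE nc_subst.
  by rewrite -subst_comp [subst p q (subst p2 q2 w1)]subst_comp E3 E4 subst_ab reduce_nc.
Qed.
End Basis.

Definition vrep (p q : word) : seq word := [:: p; finv p; q; finv q].
Definition erep (p q : word) : seq (seq word) := [:: vrep p q; vrep p (fmul p q)].
Definition trirep (p q : word) : seq (seq (seq word)) :=
  let x := vrep p q in let y := vrep p (fmul p q) in let z := vrep q (fmul p q) in
  [:: [:: x; y]; [:: y; z]; [:: z; x]].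
Definition lozrep (p q : word) (s : bool) : seq (seq (seq word)) :=
  let r := if s then p else finv p in
  let x := vrep p q in let y := vrep p (fmul p q) in
  let z := vrep p (fmul (fmul p q) r) in let w := vrep p (fmul q r) in
  [:: [:: x; y]; [:: y; z]; [:: z; w]; [:: w; x]].

Definition Vs (r : seq word) : vtx := seq_fset tt r.
Definition Es (r : seq (seq word)) : edge := seq_fset tt (map Vs r).
Definition Fs (r : seq (seq (seq word))) : face := seq_fset tt (map Es r).

Fixpoint weq (x y : word) : bool :=
  match x, y with
  | [::], [::] => true
  | (a1, b1) :: x', (a2, b2) :: y' => (if a1 then a2 else ~~ a2) && (if b1 then b2 else ~~ b2) && weq x' y'
  | _, _ => false
  end.
Lemma weqE x y : weq x y = (x == y).
Proof.
elim: x y => [|[a1 b1] x IH] [|[a2 b2] y] //=.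
by rewrite IH; case: a1; case: a2; case: b1; case: b2.
Qed.
Definition wmem (s : seq word) (x : word) := has (weq x) s.
Lemma wmemE s x : wmem s x = (x \in s).
Proof. by rewrite /wmem; elim: s => [|y s IH] //=; rewrite IH weqE inE. Qed.

Definition eqv (r s : seq word) := all (wmem s) r && all (wmem r) s.
Definition eqe (r s : seq (seq word)) :=
  all (fun x => has (eqv x) s) r && all (fun y => has (eqv y) r) s.
Definition eqf (r s : seq (seq (seq word))) :=
  all (fun x => has (eqe x) s) r && all (fun y => has (eqe y) r) s.

Lemma vert_rep p q : vert p q = Vs (vrep p q).
Proof. by apply/fsetP => x; rewrite /Vs seq_fsetE /vert !inE /= !orbA. Qed.

Lemma mkedge_rep x y : mkedge (Vs x) (Vs y) = Es [:: x; y].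
Proof. by apply/fsetP => z; rewrite /Es seq_fsetE /mkedge !inE. Qed.

Lemma tri_rep p q : tri p q = Fs (trirep p q).
Proof. by rewrite /tri !vert_rep !mkedge_rep; apply/fsetP => z; rewrite /Fs seq_fsetE !inE /= !orbA. Qed.

Lemma loz_rep p q s : loz p q s = Fs (lozrep p q s).
Proof. by rewrite /loz !vert_rep !mkedge_rep; apply/fsetP => z; rewrite /Fs seq_fsetE !inE /= !orbA. Qed.

Lemma edge_rep p q : mkedge (vert p q) (vert p (fmul p q)) = Es (erep p q).
Proof. by rewrite !vert_rep mkedge_rep. Qed.

Lemma eqvP r s : reflect (Vs r = Vs s) (eqv r s).
Proof.
rewrite /eqv (eq_all (wmemE s)) (eq_all (wmemE r)).
apply: (iffP andP) => [[H1 H2]|E].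
  apply/fsetP => x; rewrite /Vs !seq_fsetE; apply/idP/idP => H.
    exact: (allP H1).
  exact: (allP H2).
have Hm : r =i s.
  by move/fsetP: E => E x; have := E x; rewrite /Vs !seq_fsetE.
by split; apply/allP => x Hx /=; rewrite ?Hm // -Hm.
Qed.

Lemma inEsP y r : reflect (exists2 x, x \in r & y = Vs x) (y \in Es r).
Proof. rewrite /Es seq_fsetE; apply: (iffP mapP) => -[x H1 H2]; by exists x. Qed.

Lemma inFsP y r : reflect (exists2 x, x \in r & y = Es x) (y \in Fs r).
Proof. rewrite /Fs seq_fsetE; apply: (iffP mapP) => -[x H1 H2]; by exists x. Qed.

Lemma memEs x r : (Vs x \in Es r) = has (eqv x) r.
Proof.
apply/inEsP/hasP => -[y H1 H2]; exists y => //; exact/eqvP.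
Qed.

Lemma eqeP r s : reflect (Es r = Es s) (eqe r s).
Proof.
apply: (iffP andP) => [[H1 H2]|E].
  apply/fsetP => y; apply/inEsP/inEsP => -[x Hx ->].
    by have := allP H1 x Hx; rewrite -memEs => /inEsP.
  by have := allP H2 x Hx; rewrite -memEs => /inEsP.
split; apply/allP => x Hx; rewrite -memEs.
  by rewrite -E; apply/inEsP; exists x.
by rewrite E; apply/inEsP; exists x.
Qed.

Lemma memFs x r : (Es x \in Fs r) = has (eqe x) r.
Proof.
apply/inFsP/hasP => -[y H1 H2]; exists y => //; exact/eqeP.
Qed.

Lemma eqfP r s : reflect (Fs r = Fs s) (eqf r s).
Proof.
apply: (iffP andP) => [[H1 H2]|E].
  apply/fsetP => y; apply/inFsP/inFsP => -[x Hx ->].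
    by have := allP H1 x Hx; rewrite -memFs => /inFsP.
  by have := allP H2 x Hx; rewrite -memFs => /inFsP.
split; apply/allP => x Hx; rewrite -memFs.
  by rewrite -E; apply/inFsP; exists x.
by rewrite E; apply/inFsP; exists x.
Qed.

Definition wfv (r : seq word) := all nc r.
Definition wfe (r : seq (seq word)) := all wfv r.
Definition wff (r : seq (seq (seq word))) := all wfe r.

Lemma wf_vrep p q : nc p -> nc q -> wfv (vrep p q).
Proof. by move=> Hp Hq; rewrite /wfv /= Hp Hq !nc_finv. Qed.

Lemma wf_erep p q : nc p -> nc q -> wfe (erep p q).
Proof.
move=> Hp Hq; have H1 := wf_vrep Hp Hq; have H2 := wf_vrep Hp (nc_fmul p q).
by rewrite /wfe /erep (lock wfv) /= -lock H1 H2.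
Qed.

Lemma wf_trirep p q : nc p -> nc q -> wff (trirep p q).
Proof.
move=> Hp Hq; have H1 := wf_vrep Hp Hq; have H2 := wf_vrep Hp (nc_fmul p q).
have H3 := wf_vrep Hq (nc_fmul p q).
by rewrite /wff /wfe /trirep (lock wfv) /= -lock H1 H2 H3.
Qed.

Lemma wf_lozrep p q s : nc p -> nc q -> wff (lozrep p q s).
Proof.
move=> Hp Hq; have H1 := wf_vrep Hp Hq; have H2 := wf_vrep Hp (nc_fmul p q).
have H3 := wf_vrep Hp (nc_fmul (fmul p q) (if s then p else finv p)).
have H4 := wf_vrep Hp (nc_fmul q (if s then p else finv p)).
by rewrite /wff /wfe /lozrep (lock wfv) /= -lock H1 H2 H3 H4.
Qed.

Section Map.
Variable f : word -> word.
Hypothesis finj : forall x y, nc x -> nc y -> f x = f y -> x = y.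

Definition mapv := map f.
Definition mape := map mapv.
Definition mapf := map mape.

Lemma mem_mapv x s : nc x -> wfv s -> (f x \in mapv s) = (x \in s).
Proof.
move=> Hx; elim: s => [|y s IH] //= /andP[Hy Hs].
rewrite !inE IH //; congr orb; apply/eqP/eqP => [|-> //].
exact: finj.
Qed.

Lemma eqv_mapE r s : wfv r -> wfv s -> eqv (mapv r) (mapv s) = eqv r s.
Proof.
move=> Hr Hs; rewrite /eqv (eq_all (wmemE _)) (eq_all (wmemE (mapv r))) (eq_all (wmemE s)) (eq_all (wmemE r)) /mapv !all_map.
congr andb; apply: eq_in_all => x Hx /=.
  by rewrite mem_mapv // (allP Hr).
by rewrite mem_mapv // (allP Hs).
Qed.

Lemma has_eqv_mapE x r : wfv x -> wfe r -> has (eqv (mapv x)) (mape r) = has (eqv x) r.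
Proof.
move=> Hx Hr; rewrite /mape has_map; apply: eq_in_has => y Hy /=.
by rewrite eqv_mapE // (allP Hr).
Qed.

Lemma eqe_mapE r s : wfe r -> wfe s -> eqe (mape r) (mape s) = eqe r s.
Proof.
move=> Hr Hs; rewrite /eqe {1 3}/mape !all_map.
congr andb; apply: eq_in_all => x Hx /=.
  by rewrite has_eqv_mapE // (allP Hr).
by rewrite has_eqv_mapE // (allP Hs).
Qed.

Lemma has_eqe_mapE x r : wfe x -> wff r -> has (eqe (mape x)) (mapf r) = has (eqe x) r.
Proof.
move=> Hx Hr; rewrite /mapf has_map; apply: eq_in_has => y Hy /=.
by rewrite eqe_mapE // (allP Hr).
Qed.

Lemma eqf_mapE r s : wff r -> wff s -> eqf (mapf r) (mapf s) = eqf r s.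
Proof.
move=> Hr Hs; rewrite /eqf {1 3}/mapf !all_map.
congr andb; apply: eq_in_all => x Hx /=.
  by rewrite has_eqe_mapE // (allP Hr).
by rewrite has_eqe_mapE // (allP Hs).
Qed.
End Map.

Section Hom.
Variables u v : word.
Local Notation phi := (subst u v).

Lemma map_vrep p q : mapv phi (vrep p q) = vrep (phi p) (phi q).
Proof. by rewrite /mapv /vrep /= !subst_finv. Qed.

Lemma map_erep p q : mape phi (erep p q) = erep (phi p) (phi q).
Proof. by rewrite /mape /erep !map_cons !map_vrep subst_fmul. Qed.

Lemma map_trirep p q : mapf phi (trirep p q) = trirep (phi p) (phi q).
Proof. by rewrite /mapf /mape /trirep !map_cons !map_vrep subst_fmul. Qed.

Lemma map_lozrep p q s : mapf phi (lozrep p q s) = lozrep (phi p) (phi q) s.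
Proof.
rewrite /mapf /mape /lozrep !map_cons !map_vrep !subst_fmul.
by case: s => //; rewrite subst_finv.
Qed.
End Hom.

Definition la : letter := (false, false).
Definition lA : letter := (false, true).
Definition lb : letter := (true, false).
Definition lB : letter := (true, true).

Fixpoint words (n : nat) : seq word :=
  match n with
  | 0 => [:: [::]]
  | n'.+1 => [:: [::]] ++ [seq l :: w | l <- [:: la; lA; lb; lB], w <- words n']
  end.
Definition W4 := [seq w <- words 4 | nc w].
Definition W2 := [seq w <- words 2 | nc w].

Definition bcheck_with (p q p2 q2 : word) : bool :=
  [&& nc p, nc q, nc p2, nc q2, subst p2 q2 p == ga, subst p2 q2 q == gb,
      subst p q p2 == ga & subst p q q2 == gb].
Definition findw (p q t : word) := head [::] [seq w <- W4 | subst p q w == t].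
Definition bcheck (pq : word * word) : bool :=
  bcheck_with pq.1 pq.2 (findw pq.1 pq.2 ga) (findw pq.1 pq.2 gb).

Definition degen (p q : word) : bool :=
  has (fun w1 => has (fun w2 => ~~ weq w1 w2 && weq (subst p q w1) (subst p q w2)) W2) W2.

Definition candT (Y : seq word) : seq (word * word) :=
  [seq (p, q) | p <- Y, q <- Y] ++ [seq (p, fmul (finv p) m) | p <- Y, m <- Y]
  ++ [seq (fmul m (finv q), q) | q <- Y, m <- Y].

Definition lq (Y : seq word) (p : word) (s : bool) : seq word :=
  let r := if s then p else finv p in
  [seq fmul ab.1 (fmul m ab.2) | m <- Y,
     ab <- [:: ([::], [::]); (finv p, [::]); (finv p, finv r); ([::], finv r)]].

Definition candL (Y : seq word) : seq (word * word * bool) :=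
  [seq (p, qs.1, qs.2) | p <- Y, qs <- [seq (q, s) | s <- [:: true; false], q <- lq Y p s]].

Definition frep (d : bool * word * word * bool) :=
  if d.1.1.1 then trirep d.1.1.2 d.1.2 else lozrep d.1.1.2 d.1.2 d.2.

Record vdat := Vd { vpp : word * word; ved : seq (word * word); vfa : seq nat; ven : seq (seq nat) }.

Definition crossing (m : seq bool) (e : seq nat) :=
  has (fun a => has (fun b => nth false m a != nth false m b) e) e.

Fixpoint allbits (n : nat) : seq (seq bool) :=
  match n with 0 => [:: [::]] | n'.+1 => [seq b :: m | b <- [:: true; false], m <- allbits n'] end.
Definition masks8 := Eval vm_compute in allbits 8.

Definition vok (d : vdat) (bs : seq bool) : bool :=
  if all (fun j => count (fun be => be.1 && (j \in be.2)) (zip bs (ven d)) == 2) (iota 0 8) then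
  all (fun m => (has (nth false m) (iota 0 8) && has (fun j => ~~ nth false m j) (iota 0 8)) ==>
                has (fun be => be.1 && crossing m be.2) (zip bs (ven d))) masks8 else false.

Section Checks.
Variable D : seq (seq (seq (seq word))).
Definition Drep (g : nat) := nth [::] D g.

Definition Yrep (d : vdat) := vrep (vpp d).1 (vpp d).2.
Definition Ej (d : vdat) (j : nat) := erep (nth ([::], [::]) (ved d) j).1 (nth ([::], [::]) (ved d) j).2.
Definition ends (d : vdat) (g : nat) := [seq j <- iota 0 8 | has (eqe (Ej d j)) (Drep g)].

Definition vcheck (d : vdat) : bool :=
  let Y := Yrep d in
  [&& bcheck (vpp d), all bcheck (ved d), size (ved d) == 8, uniq (vfa d),
      all (fun g => g < size D) (vfa d),
      all (fun j => has (eqv Y) (Ej d j)) (iota 0 8),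
      all (fun i => all (fun j => (i != j) ==> ~~ eqe (Ej d i) (Ej d j)) (iota 0 8)) (iota 0 8),
      ven d == [seq ends d g | g <- vfa d],
      all (fun g => all (fun r => has (eqv Y) r ==> has (fun j => eqe r (Ej d j)) (iota 0 8)) (Drep g)) (vfa d),
      all (fun pq => has (has (eqv Y)) (trirep pq.1 pq.2) ==>
           has (fun g => eqf (trirep pq.1 pq.2) (Drep g)) (vfa d) || degen pq.1 pq.2) (candT Y) &
      all (fun pqs => has (has (eqv Y)) (lozrep pqs.1.1 pqs.1.2 pqs.2) ==>
           has (fun g => eqf (lozrep pqs.1.1 pqs.1.2 pqs.2) (Drep g)) (vfa d) || degen pqs.1.1 pqs.1.2) (candL Y)].

Definition gcheck : bool :=
  all (fun i => all (fun j => (i < j) ==> ~~ eqf (Drep i) (Drep j)) (iota 0 (size D))) (iota 0 (size D)).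
End Checks.
Definition pcheck (D : seq (bool * word * word * bool)) := all (fun d => nc d.1.1.2 && nc d.1.2) D.

Lemma eqv_sub Y r : eqv Y r -> {subset r <= Y}.
Proof. by case/andP=> _ /allP H x /H; rewrite wmemE. Qed.

Lemma vrep_in Y p q : eqv Y (vrep p q) -> p \in Y /\ q \in Y.
Proof. by move/eqv_sub => H; split; apply: H; rewrite !inE eqxx ?orbT. Qed.

Lemma has_has_tri Y p q : has (has (eqv Y)) (trirep p q) ->
  [\/ eqv Y (vrep p q), eqv Y (vrep p (fmul p q)) | eqv Y (vrep q (fmul p q))].
Proof.
case/hasP => e; rewrite /trirep !inE => /or3P[] /eqP -> /hasP [x];
rewrite !inE => /orP[] /eqP -> H.
- by constructor 1.
- by constructor 2.
- by constructor 2.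
- by constructor 3.
- by constructor 3.
- by constructor 1.
Qed.

Lemma candT_spec Y p q : nc p -> nc q -> has (has (eqv Y)) (trirep p q) -> (p, q) \in candT Y.
Proof.
move=> Np Nq /has_has_tri [] /vrep_in [H1 H2]; rewrite /candT !mem_cat.
- by rewrite (allpairs_f (fun x y => (x, y)) H1 H2).
- have -> : q = fmul (finv p) (fmul p q) by rewrite fmulKV.
  by rewrite (allpairs_f (fun x m => (x, fmul (finv x) m)) H1 H2) orbT.
- have -> : p = fmul (fmul p q) (finv q) by rewrite fmulK.
  by rewrite (allpairs_f (fun x m => (fmul m (finv x), x)) H1 H2) !orbT.
Qed.

Lemma has_has_loz Y p q s : has (has (eqv Y)) (lozrep p q s) ->
  exists2 m, eqv Y (vrep p m) &
   [\/ m = q, m = fmul p q, m = fmul (fmul p q) (if s then p else finv p) | m = fmul q (if s then p else finv p)].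
Proof.
case/hasP => e; rewrite /lozrep !inE => /or4P[] /eqP -> /hasP [x];
rewrite !inE => /orP[] /eqP -> H; eexists; try exact: H.
- by constructor 1.
- by constructor 2.
- by constructor 2.
- by constructor 3.
- by constructor 3.
- by constructor 4.
- by constructor 4.
- by constructor 1.
Qed.

Lemma candL_spec Y p q s : nc p -> nc q -> has (has (eqv Y)) (lozrep p q s) -> (p, q, s) \in candL Y.
Proof.
move=> Np Nq /has_has_loz [m /vrep_in [H1 H2] Hm].
rewrite /candL.
apply/allpairsPdep; exists p, (q, s); split => //.
have Hs : s \in [:: true; false] by case: s Hm.
apply/allpairsPdep; exists s, q; split => //.
rewrite /lq.
set r := if s then p else finv p.
have Nr : nc r by rewrite /r; case: (s); rewrite ?nc_finv.
case: Hm => Em.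
- apply/allpairsPdep; exists m, ([::], [::]); split; rewrite ?inE ?eqxx //=.
  by rewrite Em fmulw0 // fmul0w.
- apply/allpairsPdep; exists m, (finv p, [::]); split; rewrite ?inE ?eqxx ?orbT //=.
  by rewrite Em fmulw0 ?nc_fmul // fmulKV.
- apply/allpairsPdep; exists m, (finv p, finv r); split; rewrite ?inE ?eqxx ?orbT //=.
  by rewrite Em fmulK ?nc_fmul // fmulKV.
- apply/allpairsPdep; exists m, ([::], finv r); split; rewrite ?inE ?eqxx ?orbT //=.
  by rewrite Em fmulK // fmul0w.
Qed.

Lemma eqfC r s : eqf r s = eqf s r.
Proof. by rewrite /eqf andbC. Qed.

Lemma count2 (T : eqType) (P : pred T) (s : seq T) a b :
  uniq s -> a \in s -> b \in s -> a != b -> P a -> P b ->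
  (forall x, x \in s -> P x -> x = a \/ x = b) -> count P s = 2.
Proof.
move=> Us As Bs Nab Pa Pb H.
rewrite (@eq_in_count _ _ (predU (pred1 a) (pred1 b))); last first.
  move=> x Hx /=; apply/idP/orP => [/(H x Hx) [->|->]|[/eqP->|/eqP->]] //.
  - by left.
  - by right.
have := count_predUI (pred1 a) (pred1 b) s.
rewrite (@eq_count _ (predI _ _) pred0); last by move=> x /=; case: (eqVneq x a) => // ->; rewrite (negbTE Nab).
by rewrite count_pred0 addn0 !count_uniq_mem ?As ?Bs // => ->.
Qed.

Lemma bcheckP u v pq : is_basis u v -> bcheck pq ->
  [/\ nc pq.1, nc pq.2 & is_basis (subst u v pq.1) (subst u v pq.2)].
Proof.
move=> Hb; rewrite /bcheck; move: (findw _ _ ga) (findw _ _ gb) => p2 q2.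
case/and5P => H1 H2 H3 H4 /and4P[/eqP E1 /eqP E2 /eqP E3 /eqP E4].
by split => //; apply: (basis_phi Hb H1 H2 H3 H4 E1 E2 E3 E4).
Qed.

Section Sem.
Variables (u v : word).
Hypothesis Hb : is_basis u v.
Local Notation phi := (subst u v).
Variable DR : seq (seq (seq (seq word))).
Hypothesis HDwf : forall g, g < size DR -> wff (nth [::] DR g).
Hypothesis HDdist : gcheck DR.

Definition FF g : face := Fs (mapf phi (Drep DR g)).
Definition Yv (d : vdat) : vtx := Vs (mapv phi (Yrep d)).

Let finj : forall x y, nc x -> nc y -> phi x = phi y -> x = y := phi_inj Hb.

Lemma FF_inj g g' : g < size DR -> g' < size DR -> FF g = FF g' -> g = g'.
Proof.
move=> Hg Hg' /eqfP; rewrite eqf_mapE ?HDwf // => E.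
case: (ltngtP g g') => // Hlt; move: HDdist => /allP.
- move=> /(_ g); rewrite mem_iota add0n Hg => /(_ isT) /allP /(_ g').
  by rewrite mem_iota add0n Hg' Hlt /= => /(_ isT); rewrite /Drep E.
- move=> /(_ g'); rewrite mem_iota add0n Hg' => /(_ isT) /allP /(_ g).
  by rewrite mem_iota add0n Hg Hlt /= => /(_ isT); rewrite /Drep eqfC E.
Qed.

Lemma degen_false p q : nc p -> nc q -> is_basis (phi p) (phi q) -> degen p q -> False.
Proof.
move=> Np Nq [_ _ Hinj _] /hasP [w1 H1 /hasP [w2 H2 /andP [Ne Eq]]].
move: H1 H2; rewrite !mem_filter => /andP[N1 _] /andP[N2 _].
move: Ne Eq; rewrite !weqE => /eqP Ne /eqP Eq.
apply: Ne; apply: Hinj; rewrite ?reducedE //.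
by rewrite -!subst_comp Eq.
Qed.

Lemma Yrep_wf d : bcheck (vpp d) -> wfv (Yrep d).
Proof. by move=> /(bcheckP Hb) [H1 H2 _]; apply: wf_vrep. Qed.

Lemma classify d : vcheck DR d -> forall F, is_face F -> face_has F (Yv d) ->
  exists2 g, g \in vfa d & F = FF g.
Proof.
case/andP=> c1 /andP[c2 /andP[c3 /andP[c4 /andP[c5 /andP[c6 /andP[c7 /andP[c8 /andP[c9 /andP[c10 c11]]]]]]]]].
have WY := Yrep_wf c1.
have Hsize : forall g, g \in vfa d -> g < size DR by move=> g /(allP c5).
move=> F [[P [Q [HPQ EF]]] | [P [Q [s [HPQ EF]]]]] [e eF Ye].
- have [NP NQ _ _] := HPQ; rewrite reducedE in NP; rewrite reducedE in NQ.
  have [p Np Ep] := phi_surj Hb NP; have [q Nq Eq] := phi_surj Hb NQ.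
  subst P Q F; rewrite tri_rep -map_trirep in eF *.
  have Hhas : has (has (eqv (Yrep d))) (trirep p q).
    case/inFsP: eF => r /mapP [r0 r0in ->] Er; subst e.
    move: Ye; rewrite memEs has_eqv_mapE //; last by apply: (allP (wf_trirep Np Nq)).
    by move=> H; apply/hasP; exists r0.
  have := allP c10 _ (candT_spec Np Nq Hhas).
  move=> /implyP /(_ Hhas).
  case/orP => [/hasP [g gin Eg] | Hd]; last by case: (degen_false Np Nq HPQ Hd).
  exists g => //; rewrite /FF; apply/eqfP; rewrite eqf_mapE //; [exact: wf_trirep | apply: HDwf; exact: Hsize].
- have [NP NQ _ _] := HPQ; rewrite reducedE in NP; rewrite reducedE in NQ.
  have [p Np Ep] := phi_surj Hb NP; have [q Nq Eq] := phi_surj Hb NQ.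
  subst P Q F; rewrite loz_rep -map_lozrep in eF *.
  have Hhas : has (has (eqv (Yrep d))) (lozrep p q s).
    case/inFsP: eF => r /mapP [r0 r0in ->] Er; subst e.
    move: Ye; rewrite memEs has_eqv_mapE //; last by apply: (allP (wf_lozrep s Np Nq)).
    by move=> H; apply/hasP; exists r0.
  have := allP c11 _ (candL_spec Np Nq Hhas).
  move=> /implyP /(_ Hhas).
  case/orP => [/hasP [g gin Eg] | Hd]; last by case: (degen_false Np Nq HPQ Hd).
  exists g => //; rewrite /FF; apply/eqfP; rewrite eqf_mapE //; [exact: wf_lozrep | apply: HDwf; exact: Hsize].
Qed.
End Sem.

Lemma zip_map2 (T A B : Type) (f : T -> A) (g : T -> B) (l : seq T) :
  zip (map f l) (map g l) = map (fun x => (f x, g x)) l.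
Proof. by elim: l => //= x l ->. Qed.

Section Surf.
Variables (u v : word).
Hypothesis Hb : is_basis u v.
Local Notation phi := (subst u v).
Variable DR : seq (seq (seq (seq word))).
Hypothesis HDwf : forall g, g < size DR -> wff (nth [::] DR g).
Hypothesis HDdist : gcheck DR.
Variable S : faceset.
Hypothesis HS : is_ham_surface S.
Variable sig : nat -> bool.
Hypothesis Hsig : forall g, sig g = true <-> S (FF u v DR g).

Variable d : vdat.
Hypothesis Hd : vcheck DR d.

Let FFd := FF u v DR.
Let finj : forall x y, nc x -> nc y -> phi x = phi y -> x = y := phi_inj Hb.
Let Y := Yrep d.
Let ee j := Es (mape phi (Ej d j)).

Let c1 : bcheck (vpp d). Proof. by case/andP: Hd. Qed.
Let c2 : all bcheck (ved d). Proof. by case/andP: Hd => _ /andP[]. Qed.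
Let c3 : size (ved d) == 8. Proof. by case/andP: Hd => _ /andP[_ /andP[]]. Qed.
Let c5 : all (fun g => g < size DR) (vfa d).
Proof. by case/andP: Hd => _ /andP[_ /andP[_ /andP[_ /andP[]]]]. Qed.
Let c4 : uniq (vfa d). Proof. by case/andP: Hd => _ /andP[_ /andP[_ /andP[]]]. Qed.
Let c6 : all (fun j => has (eqv Y) (Ej d j)) (iota 0 8).
Proof. by case/andP: Hd => _ /andP[_ /andP[_ /andP[_ /andP[_ /andP[]]]]]. Qed.
Let c7 : all (fun i => all (fun j => (i != j) ==> ~~ eqe (Ej d i) (Ej d j)) (iota 0 8)) (iota 0 8).
Proof. by case/andP: Hd => _ /andP[_ /andP[_ /andP[_ /andP[_ /andP[_ /andP[]]]]]]. Qed.
Let c8 : ven d == [seq ends DR d g | g <- vfa d].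
Proof. by case/andP: Hd => _ /andP[_ /andP[_ /andP[_ /andP[_ /andP[_ /andP[_ /andP[]]]]]]]. Qed.
Let c9 : all (fun g => all (fun r => has (eqv Y) r ==> has (fun j => eqe r (Ej d j)) (iota 0 8)) (Drep DR g)) (vfa d).
Proof. by case/andP: Hd => _ /andP[_ /andP[_ /andP[_ /andP[_ /andP[_ /andP[_ /andP[_ /andP[]]]]]]]]. Qed.

Let WY : wfv Y. Proof. exact: (Yrep_wf Hb c1). Qed.
Let Hsize g : g \in vfa d -> g < size DR. Proof. by move/(allP c5). Qed.

Let Ej_ok j : j < 8 -> [/\ nc (nth ([::], [::]) (ved d) j).1, nc (nth ([::], [::]) (ved d) j).2 &
   is_basis (phi (nth ([::], [::]) (ved d) j).1) (phi (nth ([::], [::]) (ved d) j).2)].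
Proof. move=> Hj; apply: bcheckP Hb _; apply: (allP c2); apply: mem_nth; by rewrite (eqP c3). Qed.

Let Ej_wf j : j < 8 -> wfe (Ej d j).
Proof. by move=> /Ej_ok [H1 H2 _]; apply: wf_erep. Qed.

Let ee_edge j : j < 8 -> is_edge (ee j).
Proof.
move=> /Ej_ok [H1 H2 H3]; eexists; eexists; split; first exact: H3.
by rewrite edge_rep /ee /Ej map_erep.
Qed.

Let Y_ee j : j < 8 -> Yv u v d \in ee j.
Proof.
move=> Hj; rewrite /Yv /ee memEs has_eqv_mapE //; last exact: Ej_wf.
by apply: (allP c6); rewrite mem_iota.
Qed.

Let ee_inj i j : i < 8 -> j < 8 -> ee i = ee j -> i = j.
Proof.
move=> Hi Hj /eqeP; rewrite eqe_mapE ?Ej_wf // => E.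
apply/eqP; apply: contraLR E => Ne.
have := allP c7 i; rewrite mem_iota Hi => /(_ isT) /allP /(_ j).
by rewrite mem_iota Hj Ne => /(_ isT).
Qed.

Let ee_FF j g : j < 8 -> g < size DR -> (ee j \in FFd g) = has (eqe (Ej d j)) (Drep DR g).
Proof. by move=> Hj Hg; rewrite /ee /FFd /FF memFs has_eqe_mapE ?Ej_wf ?HDwf. Qed.

Let ends_mem j g : g < size DR -> (j \in ends DR d g) = (j < 8) && (ee j \in FFd g).
Proof.
move=> Hg; rewrite /ends mem_filter mem_iota add0n /= andbC.
by case: (ltnP j 8) => // Hj; rewrite ee_FF.
Qed.

Let zipE : zip (map sig (vfa d)) (ven d) = map (fun g => (sig g, ends DR d g)) (vfa d).
Proof. by rewrite (eqP c8) zip_map2. Qed.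

Let Hface F : S F -> is_face F. Proof. by case: HS => H _ _ _; apply: H. Qed.

Lemma deg_sem j : j < 8 -> count (fun be => be.1 && (j \in be.2)) (zip (map sig (vfa d)) (ven d)) = 2.
Proof.
move=> Hj; rewrite zipE count_map.
case: HS => _ _ He _.
have [F1 [F2 [[N12 S1 S2 E1 E2] Hu]]] := He _ (ee_edge Hj).
have [g1 g1in EF1] := classify Hb HDwf Hd (Hface S1) (ex_intro2 _ _ (ee j) E1 (Y_ee Hj)).
have [g2 g2in EF2] := classify Hb HDwf Hd (Hface S2) (ex_intro2 _ _ (ee j) E2 (Y_ee Hj)).
apply: (count2 c4 g1in g2in).
- by apply/eqP => E; apply: N12; rewrite EF1 EF2 E.
- rewrite /= ends_mem ?Hsize // Hj; have -> : FFd g1 = F1 by rewrite EF1.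
  rewrite E1; apply/andP; split => //; apply: (proj2 (Hsig _)); by rewrite -EF1.
- rewrite /= ends_mem ?Hsize // Hj; have -> : FFd g2 = F2 by rewrite EF2.
  rewrite E2; apply/andP; split => //; apply: (proj2 (Hsig _)); by rewrite -EF2.
- move=> g gin /= /andP [/Hsig Sg]; rewrite ends_mem ?Hsize // => /andP[_ Eg].
  case: (Hu _ Sg Eg) => E; [left | right]; apply: (FF_inj Hb HDwf HDdist); rewrite ?Hsize //.
  + by rewrite -EF1; exact: E.
  + by rewrite -EF2; exact: E.
Qed.

Lemma Yv_vertex : is_vertex (Yv u v d).
Proof.
have [N1 N2 B] := bcheckP Hb c1.
exists (phi (vpp d).1), (phi (vpp d).2); split => //.
by rewrite vert_rep /Yv /Yrep map_vrep.
Qed.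

Lemma conn_sem m : has (nth false m) (iota 0 8) -> has (fun j => ~~ nth false m j) (iota 0 8) ->
  has (fun be => be.1 && crossing m be.2) (zip (map sig (vfa d)) (ven d)).
Proof.
move=> /hasP [i iin Ki] /hasP [j jin Kj].
have Hi : i < 8 by move: iin; rewrite mem_iota.
have Hj : j < 8 by move: jin; rewrite mem_iota.
rewrite zipE has_map; apply/negPn/negP => Hno.
have Hnc : forall g, g \in vfa d -> sig g -> ~~ crossing m (ends DR d g).
  by move=> g gin sg; apply: contra Hno => C; apply/hasP; exists g => //=; rewrite sg C.
case: HS => _ _ _ Hc.
have Hrt := Hc _ Yv_vertex _ _ (ee_edge Hi) (ee_edge Hj) (Y_ee Hi) (Y_ee Hj).
have Inv : forall e1 e2, clos_refl_trans_1n edge (link_adj S (Yv u v d)) e1 e2 ->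
    (exists k, [/\ k < 8, nth false m k & e1 = ee k]) ->
    exists k, [/\ k < 8, nth false m k & e2 = ee k].
  move=> e1 e2; elim => // x y z Hxy _ IH [k [Hk Kk Ex]]; apply: IH; subst x.
  case: Hxy => F [SF eF yF [Yx Yy Ne]].
  have [g0 gin EF] := classify Hb HDwf Hd (Hface SF) (ex_intro2 _ _ (ee k) eF Yx).
  have sg : sig g0 by apply: (proj2 (Hsig _)); rewrite -EF.
  have FE : FFd g0 = F by rewrite EF.
  have kin : k \in ends DR d g0 by rewrite ends_mem ?Hsize // Hk FE eF.
  have yF' := yF.
  move: yF; rewrite EF => /inFsP [r /mapP [r0 r0in ->] Ey]; subst y.
  have Wr0 : wfe r0 by apply: (allP (HDwf (Hsize gin))).
  have := allP c9 g0 gin; move/allP/(_ r0 r0in).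
  move: Yy; rewrite /Yv memEs has_eqv_mapE // => Hy /implyP /(_ Hy) /hasP [k' k'in Ek'].
  have Hk' : k' < 8 by move: k'in; rewrite mem_iota.
  have E' : Es (mape phi r0) = ee k' by apply/eqeP; rewrite eqe_mapE // Ej_wf.
  have k'e : k' \in ends DR d g0 by rewrite ends_mem ?Hsize // Hk' FE -E'.
  exists k'; split => //.
  have := Hnc g0 gin sg; rewrite /crossing => /hasPn /(_ k kin) /hasPn /(_ k' k'e).
  by rewrite Kk negbK => /eqP <-.
have [k [Hk Kk Ek]] := Inv _ _ (clos_rt_rt1n _ _ _ _ Hrt) (ex_intro _ i (And3 Hi Ki erefl)).
by move: Kj; rewrite (ee_inj Hj Hk Ek) Kk.
Qed.

Lemma vok_sem : vok d (map sig (vfa d)).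
Proof.
rewrite /vok.
have -> : all (fun j => count (fun be => be.1 && (j \in be.2)) (zip (map sig (vfa d)) (ven d)) == 2) (iota 0 8).
  by apply/allP => j; rewrite mem_iota => /andP[_ Hj]; rewrite deg_sem.
apply/allP => m _; apply/implyP => /andP[H1 H2]; exact: conn_sem.
Qed.
End Surf.

Fixpoint lookup (asg : seq (nat * bool)) (n : nat) : bool :=
  match asg with [::] => false | (k, b) :: a => if k == n then b else lookup a n end.

Record cstr := Cs { cscope : seq nat; cpred : seq bool -> bool }.
Definition ceval (c : cstr) (f : nat -> bool) := cpred c (map f (cscope c)).

Fixpoint sdfs (gl : cstr) (sched : seq (nat * seq cstr)) (asg : seq (nat * bool)) : bool :=
  match sched with
  | [::] => ceval gl (lookup asg)
  | (x, cs) :: rest =>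
    let br b := let asg' := (x, b) :: asg in
                if all (fun c => ceval c (lookup asg')) cs then sdfs gl rest asg' else true in
    if br true then br false else false
  end.

Fixpoint sched_ok (dom : seq nat) (sched : seq (nat * seq cstr)) : bool :=
  match sched with
  | [::] => true
  | (x, cs) :: rest => all (fun c => all (fun y => y \in x :: dom) (cscope c)) cs && sched_ok (x :: dom) rest
  end.

Lemma ceval_agree c f g : {in cscope c, f =1 g} -> ceval c f = ceval c g.
Proof. by move=> H; rewrite /ceval ((eq_in_map f g (cscope c)).1 H). Qed.

Lemma all_impl (T : Type) (P Q R : pred T) (l : seq T) :
  (forall c, P c -> Q c -> R c) -> all P l -> all Q l -> all R l.
Proof. move=> H; elim: l => //= c l IH /andP[H1 H2] /andP[H3 H4]; by rewrite H // IH. Qed.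

Lemma dfs_sound gl sched asg (s : nat -> bool) :
  sdfs gl sched asg ->
  (forall y, y \in map fst asg -> s y = lookup asg y) ->
  all (fun k => all (fun c => ceval c s) k.2) sched ->
  sched_ok (map fst asg) sched ->
  all (fun y => y \in map fst asg ++ map fst sched) (cscope gl) ->
  ceval gl s.
Proof.
elim: sched asg => [|[x cs] rest IH] asg /=.
  move=> H Hag _ _ Hgl; rewrite (ceval_agree (g := lookup asg)) // => y Hy.
  by apply: Hag; have := allP Hgl y Hy; rewrite cats0.
move=> H Hag /andP[Hc1 Hc] /andP[Hok1 Hok2] Hgl.
set asg' := (x, s x) :: asg.
have Hag' : forall y, y \in map fst asg' -> s y = lookup asg' y.
  move=> y; rewrite /= inE; case: (eqVneq x y) => [-> //|Ne] /= Hy.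
  by apply: Hag.
have Hd : sdfs gl rest asg'.
  have Hall : all (fun c => ceval c (lookup asg')) cs.
    apply: (all_impl _ Hc1 Hok1) => c H1 H2.
    rewrite -(ceval_agree (f := s)) // => y Hy; apply: Hag'; exact: (allP H2 y Hy).
  move: H Hall; rewrite /asg'; case: (s x) => /andP[H1 H2] Hall.
    by move: H1; rewrite Hall.
  by move: H2; rewrite Hall.
apply: (IH asg') => //.
apply: sub_all Hgl => y; rewrite /= !mem_cat !inE.
move=> Z; rewrite mem_cat; by case/or3P: Z => ->; rewrite ?orbT.
Qed.

Definition Dat : seq (bool * word * word * bool) := [::
  (true, [:: la], [:: lb], false);
  (true, [:: la], [:: lB], false);
  (true, [:: lA], [:: lb], false);
  (true, [:: lA], [:: lB], false);
  (false, [:: la], [:: lb], true);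
  (false, [:: la], [:: lA; lb], true);
  (false, [:: la], [:: lA; lb; lA], true);
  (false, [:: la], [:: lb; lA], true);
  (false, [:: lb], [:: la], true);
  (false, [:: lb], [:: lB; la], true);
  (false, [:: lb], [:: lB; la; lB], true);
  (false, [:: lb], [:: la; lB], true);
  (true, [:: la], [:: la; lb], false);
  (true, [:: la], [:: lB; lA], false);
  (true, [:: lA], [:: lB; lA], false);
  (false, [:: la], [:: la; lb], true);
  (false, [:: la], [:: la; lb; lA], true);
  (false, [:: la; lb], [:: la], true);
  (false, [:: la; lb], [:: lB], true);
  (false, [:: la; lb], [:: lB; lB; lA], true);
  (false, [:: la; lb], [:: la; lB; lA], true);
  (true, [:: la], [:: la; lB], false);
  (true, [:: la], [:: lb; lA], false);
  (true, [:: lA], [:: lb; lA], false);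
  (false, [:: la], [:: la; lB], true);
  (false, [:: la], [:: la; lB; lA], true);
  (false, [:: la; lB], [:: la], true);
  (false, [:: la; lB], [:: lb], true);
  (false, [:: la; lB], [:: lb; lb; lA], true);
  (false, [:: la; lB], [:: la; lb; lA], true);
  (true, [:: lA], [:: lA; lb], false);
  (true, [:: lA], [:: lB; la], false);
  (true, [:: la], [:: lB; la], false);
  (false, [:: lA], [:: lA; lb], true);
  (false, [:: lA], [:: lA; lb; la], true);
  (false, [:: lA; lb], [:: lA], true);
  (false, [:: lA; lb], [:: lB], true);
  (false, [:: lA; lb], [:: lB; lB; la], true);
  (false, [:: lA; lb], [:: lA; lB; la], true);
  (true, [:: lA], [:: lA; lB], false);
  (true, [:: lA], [:: lb; la], false);
  (true, [:: la], [:: lb; la], false);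
  (false, [:: lA], [:: lA; lB], true);
  (false, [:: lA], [:: lA; lB; la], true);
  (false, [:: lA; lB], [:: lA], true);
  (false, [:: lA; lB], [:: lb], true);
  (false, [:: lA; lB], [:: lb; lb; la], true);
  (false, [:: lA; lB], [:: lA; lb; la], true);
  (true, [:: lb], [:: lb; la], false);
  (true, [:: lb], [:: lA; lB], false);
  (true, [:: lB], [:: lA; lB], false);
  (false, [:: lb], [:: lb; la], true);
  (false, [:: lb], [:: lb; la; lB], true);
  (false, [:: lb; la], [:: lb], true);
  (false, [:: lb; la], [:: lb; lA; lB], true);
  (true, [:: lb], [:: lb; lA], false);
  (true, [:: lb], [:: la; lB], false);
  (true, [:: lB], [:: la; lB], false);
  (false, [:: lb], [:: lb; lA], true);
  (false, [:: lb], [:: lb; lA; lB], true);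
  (false, [:: lb; lA], [:: lb], true);
  (false, [:: lb; lA], [:: lb; la; lB], true);
  (true, [:: lB], [:: lB; la], false);
  (true, [:: lB], [:: lA; lb], false);
  (true, [:: lb], [:: lA; lb], false);
  (false, [:: lB], [:: lB; la], true);
  (false, [:: lB], [:: lB; la; lb], true);
  (false, [:: lB; la], [:: lB], true);
  (false, [:: lB; la], [:: lB; lA; lb], true);
  (true, [:: lB], [:: lB; lA], false);
  (true, [:: lB], [:: la; lb], false);
  (true, [:: lb], [:: la; lb], false);
  (false, [:: lB], [:: lB; lA], true);
  (false, [:: lB], [:: lB; lA; lb], true);
  (false, [:: lB; lA], [:: lB], true);
  (false, [:: lB; lA], [:: lB; la; lb], true)
].
Definition Vdat : seq vdat := [::
  Vd ([:: la], [:: lb]) [:: ([:: la], [:: lb]); ([:: la], [:: lB]); ([:: lA], [:: lb]); ([:: lA], [:: lB]); ([:: lb], [:: la]); ([:: lb], [:: lA]); ([:: lB], [:: la]); ([:: lB], [:: lA])] [:: 0; 1; 2; 3; 4; 5; 6; 7; 8; 9; 10; 11] [:: [:: 0; 7]; [:: 1; 5]; [:: 2; 6]; [:: 3; 4]; [:: 0; 3]; [:: 2; 3]; [:: 1; 2]; [:: 0; 1]; [:: 4; 7]; [:: 6; 7]; [:: 5; 6]; [:: 4; 5]];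
  Vd ([:: la], [:: la; lb]) [:: ([:: la], [:: la; lb]); ([:: la], [:: lB; lA]); ([:: lA], [:: la; lb]); ([:: lA], [:: lB; lA]); ([:: la; lb], [:: la]); ([:: la; lb], [:: lA]); ([:: lB; lA], [:: la]); ([:: lB; lA], [:: lA])] [:: 12; 13; 0; 14; 15; 4; 7; 16; 17; 18; 19; 20] [:: [:: 0; 7]; [:: 1; 5]; [:: 2; 6]; [:: 3; 4]; [:: 0; 3]; [:: 2; 3]; [:: 1; 2]; [:: 0; 1]; [:: 4; 7]; [:: 6; 7]; [:: 5; 6]; [:: 4; 5]];
  Vd ([:: la], [:: la; lB]) [:: ([:: la], [:: la; lB]); ([:: la], [:: lb; lA]); ([:: lA], [:: la; lB]); ([:: lA], [:: lb; lA]); ([:: la; lB], [:: la]); ([:: la; lB], [:: lA]); ([:: lb; lA], [:: la]); ([:: lb; lA], [:: lA])] [:: 21; 22; 1; 23; 24; 6; 7; 25; 26; 27; 28; 29] [:: [:: 0; 7]; [:: 1; 5]; [:: 2; 6]; [:: 3; 4]; [:: 0; 3]; [:: 2; 3]; [:: 1; 2]; [:: 0; 1]; [:: 4; 7]; [:: 6; 7]; [:: 5; 6]; [:: 4; 5]];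
  Vd ([:: lA], [:: lA; lb]) [:: ([:: lA], [:: lA; lb]); ([:: lA], [:: lB; la]); ([:: la], [:: lA; lb]); ([:: la], [:: lB; la]); ([:: lA; lb], [:: lA]); ([:: lA; lb], [:: la]); ([:: lB; la], [:: lA]); ([:: lB; la], [:: la])] [:: 30; 31; 2; 32; 33; 6; 5; 34; 35; 36; 37; 38] [:: [:: 0; 7]; [:: 1; 5]; [:: 2; 6]; [:: 3; 4]; [:: 0; 3]; [:: 2; 3]; [:: 1; 2]; [:: 0; 1]; [:: 4; 7]; [:: 6; 7]; [:: 5; 6]; [:: 4; 5]];
  Vd ([:: lA], [:: lA; lB]) [:: ([:: lA], [:: lA; lB]); ([:: lA], [:: lb; la]); ([:: la], [:: lA; lB]); ([:: la], [:: lb; la]); ([:: lA; lB], [:: lA]); ([:: lA; lB], [:: la]); ([:: lb; la], [:: lA]); ([:: lb; la], [:: la])] [:: 39; 40; 3; 41; 42; 4; 5; 43; 44; 45; 46; 47] [:: [:: 0; 7]; [:: 1; 5]; [:: 2; 6]; [:: 3; 4]; [:: 0; 3]; [:: 2; 3]; [:: 1; 2]; [:: 0; 1]; [:: 4; 7]; [:: 6; 7]; [:: 5; 6]; [:: 4; 5]];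
  Vd ([:: lb], [:: lb; la]) [:: ([:: lb], [:: lb; la]); ([:: lb], [:: lA; lB]); ([:: lB], [:: lb; la]); ([:: lB], [:: lA; lB]); ([:: lb; la], [:: lb]); ([:: lb; la], [:: lB]); ([:: lA; lB], [:: lb]); ([:: lA; lB], [:: lB])] [:: 48; 49; 3; 50; 51; 8; 11; 52; 53; 46; 45; 54] [:: [:: 0; 7]; [:: 1; 5]; [:: 2; 6]; [:: 3; 4]; [:: 0; 3]; [:: 2; 3]; [:: 1; 2]; [:: 0; 1]; [:: 4; 7]; [:: 6; 7]; [:: 5; 6]; [:: 4; 5]];
  Vd ([:: lb], [:: lb; lA]) [:: ([:: lb], [:: lb; lA]); ([:: lb], [:: la; lB]); ([:: lB], [:: lb; lA]); ([:: lB], [:: la; lB]); ([:: lb; lA], [:: lb]); ([:: lb; lA], [:: lB]); ([:: la; lB], [:: lb]); ([:: la; lB], [:: lB])] [:: 55; 56; 1; 57; 58; 10; 11; 59; 60; 28; 27; 61] [:: [:: 0; 7]; [:: 1; 5]; [:: 2; 6]; [:: 3; 4]; [:: 0; 3]; [:: 2; 3]; [:: 1; 2]; [:: 0; 1]; [:: 4; 7]; [:: 6; 7]; [:: 5; 6]; [:: 4; 5]];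
  Vd ([:: lB], [:: lB; la]) [:: ([:: lB], [:: lB; la]); ([:: lB], [:: lA; lb]); ([:: lb], [:: lB; la]); ([:: lb], [:: lA; lb]); ([:: lB; la], [:: lB]); ([:: lB; la], [:: lb]); ([:: lA; lb], [:: lB]); ([:: lA; lb], [:: lb])] [:: 62; 63; 2; 64; 65; 10; 9; 66; 67; 37; 36; 68] [:: [:: 0; 7]; [:: 1; 5]; [:: 2; 6]; [:: 3; 4]; [:: 0; 3]; [:: 2; 3]; [:: 1; 2]; [:: 0; 1]; [:: 4; 7]; [:: 6; 7]; [:: 5; 6]; [:: 4; 5]];
  Vd ([:: lB], [:: lB; lA]) [:: ([:: lB], [:: lB; lA]); ([:: lB], [:: la; lb]); ([:: lb], [:: lB; lA]); ([:: lb], [:: la; lb]); ([:: lB; lA], [:: lB]); ([:: lB; lA], [:: lb]); ([:: la; lb], [:: lB]); ([:: la; lb], [:: lb])] [:: 69; 70; 0; 71; 72; 8; 9; 73; 74; 19; 18; 75] [:: [:: 0; 7]; [:: 1; 5]; [:: 2; 6]; [:: 3; 4]; [:: 0; 3]; [:: 2; 3]; [:: 1; 2]; [:: 0; 1]; [:: 4; 7]; [:: 6; 7]; [:: 5; 6]; [:: 4; 5]]].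
Definition vorder : seq nat := [:: 0; 1; 2; 3; 4; 5; 6; 7; 8; 9; 10; 11; 12; 13; 14; 15; 16; 17; 18; 19; 20; 21; 22; 23; 24; 25; 26; 27; 28; 29; 30; 31; 32; 33; 34; 35; 36; 37; 38; 39; 40; 41; 42; 43; 44; 45; 46; 47; 48; 49; 50; 51; 52; 53; 54; 55; 56; 57; 58; 59; 60; 61; 62; 63; 64; 65; 66; 67; 68; 69; 70; 71; 72; 73; 74; 75].
Definition goodc : seq (seq bool) := [:: [:: true; true; true; true; false; true; false; true; true; false; true; false]; [:: true; true; true; true; true; false; true; false; false; true; false; true]].
Definition vsched : seq (nat * seq nat) := [:: (0, [:: ]); (1, [:: ]); (2, [:: ]); (3, [:: ]); (4, [:: ]); (5, [:: ]); (6, [:: ]); (7, [:: ]); (8, [:: ]); (9, [:: ]); (10, [:: ]); (11, [:: 0]); (12, [:: ]); (13, [:: ]); (14, [:: ]); (15, [:: ]); (16, [:: ]); (17, [:: ]); (18, [:: ]); (19, [:: ]); (20, [:: 1]); (21, [:: ]); (22, [:: ]); (23, [:: ]); (24, [:: ]); (25, [:: ]); (26, [:: ]); (27, [:: ]); (28, [:: ]); (29, [:: 2]); (30, [:: ]); (31, [:: ]); (32, [:: ]); (33, [:: ]); (34, [:: ]); (35, [:: ]); (36, [:: ]); (37, [:: ]); (38, [:: 3]); (39, [:: ]); (40, [:: ]); (41, [:: ]); (42, [:: ]); (43, [:: ]); (44, [:: ]); (45, [:: ]); (46, [:: ]); (47, [:: 4]); (48, [:: ]); (49, [:: ]); (50,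 [:: ]); (51, [:: ]); (52, [:: ]); (53, [:: ]); (54, [:: 5]); (55, [:: ]); (56, [:: ]); (57, [:: ]); (58, [:: ]); (59, [:: ]); (60, [:: ]); (61, [:: 6]); (62, [:: ]); (63, [:: ]); (64, [:: ]); (65, [:: ]); (66, [:: ]); (67, [:: ]); (68, [:: 7]); (69, [:: ]); (70, [:: ]); (71, [:: ]); (72, [:: ]); (73, [:: ]); (74, [:: ]); (75, [:: 8])].
Definition DRc := map frep Dat.
Definition dflt_vd := Vd ([::],[::]) [::] [::] [::].
Definition cs_of (d : vdat) := Cs (vfa d) (vok d).
Definition d0 := nth dflt_vd Vdat 0.
Definition gl := Cs (vfa d0) (fun bs => bs \in goodc).
Definition sched := [seq (xl.1, [seq cs_of (nth dflt_vd Vdat i) | i <- xl.2]) | xl <- vsched].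

Lemma pcheck_ok : pcheck Dat. Proof. vm_cast_no_check (erefl true). Qed.
Lemma gcheck_ok : gcheck DRc. Proof. vm_cast_no_check (erefl true). Qed.
Lemma vcheck_ok : all (vcheck DRc) Vdat. Proof. vm_cast_no_check (erefl true). Qed.
Lemma sched_ok_ok : sched_ok [::] sched. Proof. vm_cast_no_check (erefl true). Qed.
Lemma dfs_ok : sdfs gl sched [::]. Proof. vm_cast_no_check (erefl true). Qed.
Lemma gl_scope : all (fun y => y \in [::] ++ map fst sched) (cscope gl). Proof. vm_cast_no_check (erefl true). Qed.
Lemma vsched_ok : all (fun xl => all (fun i => i < size Vdat) xl.2) vsched. Proof. vm_cast_no_check (erefl true). Qed.
Lemma d0_pp : vpp d0 = (ga, gb). Proof. by []. Qed.
Lemma goodc_size : goodc = [:: nth [::] goodc 0; nth [::] goodc 1]. Proof. by []. Qed.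

Lemma HDwf_c g : g < size DRc -> wff (nth [::] DRc g).
Proof.
rewrite size_map => Hg; rewrite (nth_map (true, [::], [::], true)) //.
have := allP pcheck_ok _ (mem_nth (true, [::], [::], true) Hg).
case: (nth _ Dat g) => [[[t p] q] s] /= /andP[Np Nq]; rewrite /frep /=.
by case: t; [apply: wf_trirep | apply: wf_lozrep].
Qed.

Lemma sig_ex (P : nat -> Prop) : exists sig : nat -> bool, forall g, sig g = true <-> P g.
Proof.
exists (fun g => if excluded_middle_informative (P g) then true else false) => g.
by case: excluded_middle_informative.
Qed.

Section Fin.
Variables (u v : word).
Hypothesis Hb : is_basis u v.

Lemma key (S : faceset) (sig : nat -> bool) : is_ham_surface S ->
  (forall g, sig g = true <-> S (FF u v DRc g)) -> map sig (vfa d0) \in goodc.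
Proof.
move=> HS Hsig.
apply: (dfs_sound (s := sig) dfs_ok _ _ sched_ok_ok gl_scope).
  by move=> y; rewrite in_nil.
rewrite /sched all_map; apply/allP => xl xlin /=; rewrite all_map; apply/allP => i iin /=.
have Hi : i < size Vdat by have := allP vsched_ok xl xlin => /allP /(_ i iin).
rewrite /cs_of /ceval /=.
apply: (vok_sem Hb HDwf_c gcheck_ok HS Hsig).
exact: (all_nthP dflt_vd vcheck_ok i Hi).
Qed.

Lemma Yv0 : Yv u v d0 = vert u v.
Proof.
have [N1 N2 _ _] := Hb; rewrite !reducedE in N1 N2.
by rewrite /Yv /Yrep d0_pp map_vrep subst_ga // subst_gb // vert_rep.
Qed.

Lemma same_of (S S' : faceset) sig sig' : is_ham_surface S -> is_ham_surface S' ->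
  (forall g, sig g = true <-> S (FF u v DRc g)) ->
  (forall g, sig' g = true <-> S' (FF u v DRc g)) ->
  map sig (vfa d0) = map sig' (vfa d0) -> same_link S S' (vert u v).
Proof.
move=> HS HS' Hs Hs' E.
have Hd0 : vcheck DRc d0 by exact: (all_nthP dflt_vd vcheck_ok 0 isT).
have Eq := (eq_in_map sig sig' (vfa d0)).2 E.
move=> F; split => -[SF Fh]; (split; last exact: Fh).
- have [HSf _ _ _] := HS.
  have [g gin EF] := classify Hb HDwf_c Hd0 (HSf _ SF) (eq_ind_r _ Fh Yv0).
  rewrite EF; apply/Hs'; rewrite -(Eq g gin); apply/Hs; rewrite -EF.
  exact: SF.
- have [HSf _ _ _] := HS'.
  have [g gin EF] := classify Hb HDwf_c Hd0 (HSf _ SF) (eq_ind_r _ Fh Yv0).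
  rewrite EF; apply/Hs; rewrite (Eq g gin); apply/Hs'; rewrite -EF.
  exact: SF.
Qed.
End Fin.

Theorem mainTheorem6 :
  forall x : vtx, is_vertex x ->
  forall S1 S2 S3 : faceset,
    is_ham_surface S1 -> is_ham_surface S2 -> is_ham_surface S3 ->
    same_link S1 S2 x \/ same_link S1 S3 x \/ same_link S2 S3 x.
Proof.
move=> x [u [v [Hb ->]]] S1 S2 S3 H1 H2 H3.
have [s1 Hs1] := sig_ex (fun g => S1 (FF u v DRc g)).
have [s2 Hs2] := sig_ex (fun g => S2 (FF u v DRc g)).
have [s3 Hs3] := sig_ex (fun g => S3 (FF u v DRc g)).
have K1 := key Hb H1 Hs1; have K2 := key Hb H2 Hs2; have K3 := key Hb H3 Hs3.
move: K1 K2 K3; rewrite goodc_size !inE.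
case/orP => /eqP E1; case/orP => /eqP E2; case/orP => /eqP E3.
- by left; apply: (same_of Hb H1 H2 Hs1 Hs2); rewrite E1 E2.
- by left; apply: (same_of Hb H1 H2 Hs1 Hs2); rewrite E1 E2.
- by right; left; apply: (same_of Hb H1 H3 Hs1 Hs3); rewrite E1 E3.
- by right; right; apply: (same_of Hb H2 H3 Hs2 Hs3); rewrite E2 E3.
- by right; right; apply: (same_of Hb H2 H3 Hs2 Hs3); rewrite E2 E3.
- by right; left; apply: (same_of Hb H1 H3 Hs1 Hs3); rewrite E1 E3.
- by left; apply: (same_of Hb H1 H2 Hs1 Hs2); rewrite E1 E2.
- by left; apply: (same_of Hb H1 H2 Hs1 Hs2); rewrite E1 E2.
Qed.
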